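(* Let $m,n$ be even positive integers and let $f$ be the partial Boolean function on $2mn$ bits defined in the context. Then the nondeterministic quantum query complexity of $f$ satisfies $NQ(f)=\min(n/2,m/2)+1$.
   Context: For $z\in\{0,1\}^k$ let $w(z)$ denote its Hamming weight. Let $\mathcal{A}_1=\{0^m y : y\in\{0,1\}^m,\ m/2\le w(y)\le m\}$ and $\mathcal{A}_0=\{y0^m : y\in\{0,1\}^m,\ m/2\le w(y)\le m\}$. A string $x\in\{0,1\}^{2mn}$ is viewed as $n$ consecutive blocks of $2m$ bits. Define $\mathcal{X}_1=\mathcal{A}_0\times\cdots\times\mathcal{A}_0$ ($n$ factors) and $\mathcal{X}_0=\bigcup\{\mathcal{A}_{y_1}\times\cdots\times\mathcal{A}_{y_n} : y\in\{0,1\}^n,\ w(y)=n/2\}$. The partial function $f$ has domain $\mathcal{X}_0\cup\mathcal{X}_1$ with $f(x)=1$ on $\mathcal{X}_1$ and $f(x)=0$ on $\mathcal{X}_0$ (it is the composition of the Deutsch–Jozsa constant-vs-balanced function on $n$ bits with $n$ copies of the partial function $h$ on $2m$ bits that is $1$ on $\mathcal{A}_1$ and $0$ on $\mathcal{A}_0$). Quantum query model: the input $x\in\{0,1\}^N$ is accessed via the unitary $O_x:|i,b,z\rangle\mapsto|i,b\oplus x_i,z\rangle$; a $T$-query algorithm is $U_TO_xU_{T-1}\cdots O_xU_1O_xU_0$ applied to $|0\rangle$, with fixed unitaries $U_k$, followed by a measurement giving output $0$, $1$, or ''don't know''. A nondeterministic quantum algorithm for $f$ outputs $1$ with positive probability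 on every $x\in\mathcal{X}_1$ and with probability $0$ on every $x\in\mathcal{X}_0$. $NQ(f)$ is the minimal number of queries of such an algorithm. *)

(* Defs.v *)
From mathcomp Require Import all_boot all_order all_algebra.
From mathcomp Require Import Rstruct complex.
Set Implicit Arguments. Unset Strict Implicit. Unset Printing Implicit Defensive.
Import Order.TTheory GRing.Theory Num.Theory.

(* bit k of an input x : 'I_N -> bool (false outside the range; never used there) *)
Definition bitx (N : nat) (x : 'I_N -> bool) (k : nat) : bool :=
  if (insub k : option 'I_N) is Some i then x i else false.

Definition block (m N : nat) (x : 'I_N -> bool) (j : nat) : nat -> bool :=
  fun p => bitx x (j * (2 * m) + p).

Definition inA1 (m : nat) (z : nat -> bool) : bool :=
  [forall p : 'I_m, ~~ z p] &&
  (m %/ 2 <= \sum_(p < m) (z (m + p) : nat) <= m).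

Definition inA0 (m : nat) (z : nat -> bool) : bool :=
  [forall p : 'I_m, ~~ z (m + p)] &&
  (m %/ 2 <= \sum_(p < m) (z p : nat) <= m).

Definition inA (m : nat) (b : bool) (z : nat -> bool) : bool :=
  if b then inA1 m z else inA0 m z.

(* X_1 = A_0 x ... x A_0  (f = 1) *)
Definition X1 (m n : nat) (x : 'I_(2 * m * n) -> bool) : Prop :=
  forall j : 'I_n, inA0 m (block m x j).

(* X_0 = union over y of weight n/2 of A_{y_1} x ... x A_{y_n}  (f = 0) *)
Definition X0 (m n : nat) (x : 'I_(2 * m * n) -> bool) : Prop :=
  exists y : 'I_n -> bool,
    (\sum_(j < n) (y j : nat) = n %/ 2)%N /\
    forall j : 'I_n, inA m (y j) (block m x j).

Local Open Scope ring_scope.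

Definition C := (Rdefinitions.R)[i].

(* basis states |i, b, z> : query index, answer bit, workspace of dimension w *)
Definition basisT (N w : nat) : finType := ('I_N * bool * 'I_w)%type.

Definition dim (N w : nat) : nat := #|basisT N w|.

Definition ket (N w : nat) (s : basisT N w) : 'cV[C]_(dim N w) :=
  delta_mx (enum_rank s) 0.

Definition oflip (N w : nat) (x : 'I_N -> bool) (s : basisT N w) : basisT N w :=
  let: (i, b, z) := s in (i, addb b (x i), z).

Definition oracle (N w : nat) (x : 'I_N -> bool) : 'M[C]_(dim N w) :=
  \matrix_(r, c) ((enum_val r == oflip x (enum_val c))%:R).

Definition unitary (d : nat) (U : 'M[C]_d) : Prop :=
  U *m (map_mx Num.conj U)^T = 1%:M.

(* state after U_k O_x U_{k-1} ... O_x U_0 applied to the initial basis state s0 *)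
Fixpoint run (N w : nat) (U : nat -> 'M[C]_(dim N w)) (x : 'I_N -> bool)
    (s0 : basisT N w) (k : nat) : 'cV[C]_(dim N w) :=
  match k with
  | 0 => U 0%N *m @ket N w s0
  | k'.+1 => U k *m (@oracle N w x *m @run N w U x s0 k')
  end.

(* probability that the final computational-basis measurement, followed by the
   classical labelling out (Some b = output b, None = "don't know"), outputs 1 *)
Definition prob_out1 (N w : nat) (U : nat -> 'M[C]_(dim N w)) (out : basisT N w -> option bool)
    (x : 'I_N -> bool) (s0 : basisT N w) (T : nat) : C :=
  \sum_(s : basisT N w | out s == Some true) `|run U x s0 T (enum_rank s) 0| ^+ 2.

Definition NQ_alg (N : nat) (F1 F0 : ('I_N -> bool) -> Prop) (T : nat) : Prop :=
  exists (w : nat) (s0 : basisT N w) (U : nat -> 'M[C]_(dim N w))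
         (out : basisT N w -> option bool),
    (forall k, (k <= T)%N -> unitary (U k)) /\
    (forall x, F1 x -> 0 < prob_out1 U out x s0 T) /\
    (forall x, F0 x -> prob_out1 U out x s0 T = 0).

Definition NQ_is (N : nat) (F1 F0 : ('I_N -> bool) -> Prop) (q : nat) : Prop :=
  NQ_alg F1 F0 q /\ forall T, NQ_alg F1 F0 T -> (q <= T)%N.

(* Main.v *)
Require Import Defs.
From mathcomp Require Import all_boot all_order all_algebra.
From mathcomp Require Import Rstruct complex.
From Stdlib Require Import FunctionalExtensionality.
From mathcomp Require Import zify.
Set Implicit Arguments. Unset Strict Implicit. Unset Printing Implicit Defensive.
Import Order.TTheory GRing.Theory Num.Theory.
Local Open Scope ring_scope.


Section Poly.
Variable I : finType.
Implicit Types S T U : {set I}.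

Definition mono (S : {set I}) (x : I -> bool) : C := ([forall i in S, x i] : nat)%:R.

Definition Dg (d : nat) (f : (I -> bool) -> C) : Prop :=
  exists c : {set I} -> C, (forall S : {set I}, (d < #|S|)%N -> c S = 0) /\
    forall x, f x = \sum_(S : {set I}) c S * mono S x.

Lemma Dg_ext d f g : Dg d f -> (forall x, f x = g x) -> Dg d g.
Proof. by move=> [c [h1 h2]] e; exists c; split=> // x; rewrite -e. Qed.

Lemma Dg_le d d' f : (d <= d')%N -> Dg d f -> Dg d' f.
Proof.
move=> le [c [h1 h2]]; exists c; split=> // S lt; apply: h1.
exact: leq_ltn_trans lt.
Qed.

Lemma Dg_mono d S : (#|S| <= d)%N -> Dg d (mono S).
Proof.
move=> le; exists (fun T => (T == S)%:R); split.
  move=> T lt; case: eqP => // eTS; move: lt; rewrite eTS ltnNge le //.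
move=> x; rewrite (bigD1 S) //= eqxx mul1r big1 ?addr0 // => T /negPf ->.
by rewrite mul0r.
Qed.

Lemma Dg_zero d : Dg d (fun _ => 0).
Proof. by exists (fun _ => 0); split=> // x; rewrite big1 // => S _; rewrite mul0r. Qed.

Lemma Dg_add d f g : Dg d f -> Dg d g -> Dg d (fun x => f x + g x).
Proof.
move=> [c [h1 h2]] [e [k1 k2]]; exists (fun S => c S + e S); split.
  by move=> S lt; rewrite h1 // k1 // addr0.
by move=> x; rewrite h2 k2 -big_split /=; apply: eq_bigr => S _; rewrite mulrDl.
Qed.

Lemma Dg_scale d a f : Dg d f -> Dg d (fun x => a * f x).
Proof.
move=> [c [h1 h2]]; exists (fun S => a * c S); split.
  by move=> S lt; rewrite h1 // mulr0.
by move=> x; rewrite h2 mulr_sumr; apply: eq_bigr => S _; rewrite mulrA.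
Qed.

Lemma Dg_sum d (J : Type) (s : seq J) (F : J -> (I -> bool) -> C) :
  (forall j, Dg d (F j)) -> Dg d (fun x => \sum_(j <- s) F j x).
Proof.
move=> h; elim: s => [|j s IH].
  apply: (Dg_ext (Dg_zero d)) => x. by rewrite big_nil.
by apply: (Dg_ext (Dg_add (h j) IH)) => x; rewrite big_cons.
Qed.

Lemma Dg_sumT d (J : finType) (F : J -> (I -> bool) -> C) :
  (forall j, Dg d (F j)) -> Dg d (fun x => \sum_j F j x).
Proof.
move=> h; exact: (Dg_sum (index_enum J) h).
Qed.

Lemma mono_mul S T x : mono S x * mono T x = mono (S :|: T) x.
Proof.
rewrite /mono -natrM; congr (_%:R).
case: (boolP [forall i in S, x i]) => /forall_inP hS;
case: (boolP [forall i in T, x i]) => /forall_inP hT /=.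
- symmetry; apply/eqP; rewrite eqb1; apply/forall_inP => i; rewrite in_setU.
  by case/orP; [apply: hS | apply: hT].
- symmetry; apply/eqP; rewrite eqb0; apply/negP => /forall_inP h; apply: hT.
  by move=> i iT; apply: h; rewrite in_setU iT orbT.
- symmetry; apply/eqP; rewrite eqb0; apply/negP => /forall_inP h; apply: hS.
  by move=> i iT; apply: h; rewrite in_setU iT.
- symmetry; apply/eqP; rewrite eqb0; apply/negP => /forall_inP h; apply: hS.
  by move=> i iT; apply: h; rewrite in_setU iT.
Qed.

Lemma Dg_mul a b f g : Dg a f -> Dg b g -> Dg (a + b) (fun x => f x * g x).
Proof.
move=> [c [h1 h2]] [e [k1 k2]].
have H : Dg (a + b) (fun x => \sum_(S : {set I}) \sum_(T : {set I}) (c S * e T) * mono (S :|: T) x).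
  apply: Dg_sumT => S; apply: Dg_sumT => T.
  case: (leqP #|S| a) => hS; last first.
    by apply: (Dg_ext (Dg_zero _)) => x; rewrite h1 // mul0r mul0r.
  case: (leqP #|T| b) => hT; last first.
    by apply: (Dg_ext (Dg_zero _)) => x; rewrite k1 // mulr0 mul0r.
  apply: Dg_scale; apply: Dg_mono.
  by apply: leq_trans (leq_card_setU _ _) _; apply: leq_add.
apply: (Dg_ext H) => x; rewrite h2 k2 mulr_suml; apply: eq_bigr => S _.
rewrite mulr_sumr; apply: eq_bigr => T _.
by rewrite -mono_mul mulrACA.
Qed.

Lemma Dg_const a : Dg 0 (fun _ => a).
Proof.
have h0 : (#|(set0 : {set I})| <= 0)%N by rewrite cards0.
apply: (Dg_ext (Dg_scale a (Dg_mono h0))) => x.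
rewrite /mono; have -> : [forall i in set0, x i] by apply/forall_inP => i; rewrite inE.
by rewrite mulr1.
Qed.

Lemma Dg_var i : Dg 1 (fun x => (x i : nat)%:R).
Proof.
have h1 : (#|[set i]| <= 1)%N by rewrite cards1.
apply: (Dg_ext (Dg_mono h1)) => x.
rewrite /mono; congr (_%:R); congr (nat_of_bool _).
apply/forall_inP/idP => [h|xi j]; first by apply: h; rewrite inE.
by rewrite inE => /eqP ->.
Qed.

Lemma prod_bool (S : {set I}) (b : I -> bool) :
  \prod_(i in S) ((b i : nat)%:R : C) = ([forall i in S, b i] : nat)%:R.
Proof.
case: (boolP [forall i in S, b i]) => [/forall_inP h | /forall_inPn [i iS bi]].
  by rewrite big1 // => i /h ->.
by rewrite (bigD1 i) //= (negPf bi) mul0r.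
Qed.

Lemma Dg_comp d (phi : (I -> bool) -> I -> bool) f :
  (forall i, Dg 1 (fun z => (phi z i : nat)%:R)) -> Dg d f -> Dg d (fun z => f (phi z)).
Proof.
move=> hphi [c [h1 h2]].
have Hs : forall s : seq I, Dg (size s) (fun z => \prod_(i <- s) ((phi z i : nat)%:R : C)).
  elim=> [|i s IH] /=.
    by apply: (Dg_ext (Dg_const 1)) => z; rewrite big_nil.
  by apply: (Dg_ext (Dg_mul (hphi i) IH)) => z; rewrite big_cons.
have H : Dg d (fun z => \sum_(S : {set I}) c S * mono S (phi z)).
  apply: Dg_sumT => S; case: (leqP #|S| d) => hS; last first.
    by apply: (Dg_ext (Dg_zero _)) => x; rewrite h1 // mul0r.
  have hs : (size (enum S) <= d)%N by rewrite -cardE.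
  apply: Dg_scale; apply: (Dg_ext (Dg_le hs (Hs (enum S)))).
  by move=> z; rewrite /mono -prod_bool big_enum.
by apply: (Dg_ext H) => z; rewrite h2.
Qed.

Lemma Dg_negvar i : Dg 1 (fun x => ((~~ x i) : nat)%:R).
Proof.
apply: (Dg_ext (Dg_add (Dg_le (leq0n 1) (Dg_const 1)) (Dg_scale (-1) (Dg_var i)))) => x.
by case: (x i); rewrite /= ?mulr1 ?mulr0 ?addr0 ?subrr.
Qed.

Lemma Dg_cst1 (b : bool) : Dg 1 (fun _ => (b : nat)%:R).
Proof. exact: Dg_le (leq0n 1) (Dg_const _). Qed.

Lemma Dg_core d f : Dg d f ->
  (forall U : {set I}, (#|U| <= d)%N -> f (fun i => i \in U) = 0) -> forall x, f x = 0.
Proof.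
move=> [c [h1 h2]] hU.
have step : forall S, (forall T, T \proper S -> c T = 0) -> c S = 0.
  move=> S IH; case: (leqP #|S| d) => hSd; last exact: h1.
  have := hU S hSd; rewrite h2 (bigD1 S) //= big1 ?addr0.
    rewrite /mono; have -> : [forall i in S, i \in S] by apply/forall_inP.
    by rewrite mulr1.
  move=> T TS; rewrite /mono.
  case: (boolP [forall i in T, i \in S]) => [/forall_inP sub|]; last by rewrite mulr0.
  have sTS : T \proper S by rewrite properEneq TS; apply/subsetP.
  by rewrite IH ?mul0r.
have hc : forall k S, (#|S| < k)%N -> c S = 0.
  elim=> [|k IH] S hS //; apply: step => T /proper_card lt.
  by apply: IH; apply: leq_trans lt _.
move=> x; rewrite h2 big1 // => S _; rewrite (hc #|S|.+1) ?mul0r //.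
Qed.

Lemma sum_bool_card k (b : 'I_k -> bool) :
  (\sum_(p < k) (b p : nat))%N = #|[set p | b p]|.
Proof.
symmetry; rewrite -sum1_card big_mkcond /=; apply: eq_bigr => p _.
by rewrite inE; case: (b p).
Qed.

Lemma sum_bool_neg k (b : 'I_k -> bool) :
  (\sum_(p < k) (b p : nat) + \sum_(p < k) (~~ b p : nat))%N = k.
Proof.
rewrite -big_split /= -[X in _ = X]card_ord -sum1_card.
by apply: eq_bigr => p _; case: (b p).
Qed.

Lemma ball d h k (e : 'I_k -> I) (R : (I -> bool) -> Prop) f :
  injective e -> Dg d f -> (d + h <= k)%N ->
  (forall x x', (forall i, i \notin codom e -> x i = x' i) -> R x -> R x') ->
  (forall x, R x -> (h <= \sum_(p < k) (x (e p) : nat))%N -> f x = 0) ->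
  forall x, R x -> f x = 0.
Proof.
move=> inj_e Df hk hR hW x Rx.
pose phi := fun (z : I -> bool) i => if i \in codom e then ~~ z i else x i.
have Dg_g : Dg d (fun z => f (phi z)).
  apply: Dg_comp Df => i; rewrite /phi; case: (i \in codom e).
    exact: Dg_negvar.
  exact: Dg_cst1.
have g0 := Dg_core Dg_g.
have -> : x = phi (fun i => ~~ x i).
  by apply: functional_extensionality => i; rewrite /phi; case: (i \in codom e) => //; rewrite negbK.
apply: g0 => U hU; apply: hW.
  by apply: hR Rx => i /negPf hi; rewrite /phi hi.
have e1 : forall p, phi (fun i => i \in U) (e p) = ~~ (e p \in U).
  by move=> p; rewrite /phi codom_f.
under eq_bigr => p _ do rewrite e1.
have := sum_bool_neg (fun p => e p \in U).
have : (#|[set p | e p \in U]| <= #|U|)%N.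
  rewrite -(card_imset _ inj_e); apply: subset_leq_card.
  by apply/subsetP => i /imsetP [p]; rewrite inE => pU ->.
rewrite -sum_bool_card => h1 h2.
move: h1 h2; set a := \sum_(p < k) _; set b := \sum_(p < k) _ => h1 h2.
lia.
Qed.

Lemma step3 d (F : {set I}) (P : (I -> bool) -> Prop) f : Dg d f ->
  (forall U, (#|U| <= d)%N -> P (fun i => (i \in F) && (i \in U))) ->
  (forall x, P x -> f x = 0) -> f (fun i => i \in F) = 0.
Proof.
move=> Df hP hf.
have Dg_g : Dg d (fun z => f (fun i => (i \in F) && z i)).
  apply: Dg_comp Df => i; case: (i \in F).
    exact: Dg_var.
  exact: (Dg_ext (Dg_cst1 false)).
have := Dg_core Dg_g; move/(_ _ (fun _ => true)).
have -> : (fun i => (i \in F) && true) = (fun i => i \in F).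
  by apply: functional_extensionality => i; rewrite andbT.
apply => U hU; apply: hf; exact: hP.
Qed.

End Poly.


Section Blocks.
Variables m n : nat.
Hypothesis hm : (0 < m)%N.
Hypothesis hn : (0 < n)%N.
Local Notation N := (2 * m * n)%N.
Local Notation I := 'I_N.

Lemma lt_fst (j : 'I_n) (p : 'I_m) : (j * (2 * m) + p < N)%N.
Proof. have := ltn_ord j; have := ltn_ord p; nia. Qed.
Lemma lt_snd (j : 'I_n) (p : 'I_m) : (j * (2 * m) + (m + p) < N)%N.
Proof. have := ltn_ord j; have := ltn_ord p; nia. Qed.

Definition fstp j p : I := Ordinal (lt_fst j p).
Definition sndp j p : I := Ordinal (lt_snd j p).

Lemma divmod_blk (j q : nat) : (q < 2 * m)%N ->
  ((j * (2 * m) + q) %/ (2 * m) = j /\ (j * (2 * m) + q) %% (2 * m) = q)%N.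
Proof.
move=> hq; split; first by rewrite divnMDl ?divn_small ?addn0 //; lia.
by rewrite modnMDl modn_small.
Qed.

Lemma blk_eq (j j' : 'I_n) q q' : (q < 2 * m)%N -> (q' < 2 * m)%N ->
  (j * (2 * m) + q = j' * (2 * m) + q')%N -> j = j' /\ q = q'.
Proof.
move=> hq hq' e; have [a b] := divmod_blk j hq; have [a' b'] := divmod_blk j' hq'.
split; first by apply: val_inj; rewrite /= -a -a' e.
by rewrite -b -b' e.
Qed.

Lemma fstp_inj j p j' p' : fstp j p = fstp j' p' -> j = j' /\ p = p'.
Proof.
move/(congr1 val) => /= e.
have h1 : (p < 2 * m)%N by have := ltn_ord p; lia.
have h2 : (p' < 2 * m)%N by have := ltn_ord p'; lia.
have [-> ep] := blk_eq h1 h2 e; split=> //; apply: val_inj; exact: ep.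
Qed.

Lemma sndp_inj j p j' p' : sndp j p = sndp j' p' -> j = j' /\ p = p'.
Proof.
move/(congr1 val) => /= e.
have h1 : (m + p < 2 * m)%N by have := ltn_ord p; lia.
have h2 : (m + p' < 2 * m)%N by have := ltn_ord p'; lia.
have [-> ep] := blk_eq h1 h2 e; split=> //; apply: val_inj; apply/eqP; rewrite -(eqn_add2l m) ep; exact: eqxx.
Qed.

Lemma fst_snd j p j' p' : fstp j p <> sndp j' p'.
Proof.
move/(congr1 val) => /= e.
have h1 : (p < 2 * m)%N by have := ltn_ord p; lia.
have h2 : (m + p' < 2 * m)%N by have := ltn_ord p'; lia.
have [_ ep] := blk_eq h1 h2 e; have := ltn_ord p; lia.
Qed.

Lemma bitx_ord (x : I -> bool) k (hk : (k < N)%N) : bitx x k = x (Ordinal hk).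
Proof. by rewrite /bitx insubT /=; congr (x _); apply: val_inj. Qed.

Lemma block_fst (x : I -> bool) (j : 'I_n) (p : 'I_m) : block m x j p = x (fstp j p).
Proof. by rewrite /block (bitx_ord x (lt_fst j p)). Qed.
Lemma block_snd (x : I -> bool) (j : 'I_n) (p : 'I_m) : block m x j (m + p) = x (sndp j p).
Proof. by rewrite /block (bitx_ord x (lt_snd j p)). Qed.

Definition Z1 (x : I -> bool) j := forall p, x (fstp j p) = false.
Definition Z2 (x : I -> bool) j := forall p, x (sndp j p) = false.
Definition W1 (x : I -> bool) j := (m %/ 2 <= \sum_(p < m) (x (fstp j p) : nat))%N.
Definition W2 (x : I -> bool) j := (m %/ 2 <= \sum_(p < m) (x (sndp j p) : nat))%N.

Lemma sum_le_m (b : 'I_m -> bool) : (\sum_(p < m) (b p : nat) <= m)%N.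
Proof.
rewrite -[X in (_ <= X)%N]card_ord -sum1_card; apply: leq_sum => p _.
by case: (b p).
Qed.

Lemma inA0E (x : I -> bool) (j : 'I_n) : inA0 m (block m x j) <-> Z2 x j /\ W1 x j.
Proof.
rewrite /inA0 /Z2 /W1; split.
  case/andP => /forallP h /andP [h1 h2]; split.
    by move=> p; have := h p; rewrite block_snd => /negPf.
  by move: h1; under eq_bigr => p _ do rewrite block_fst.
move=> [h1 h2]; apply/andP; split.
  by apply/forallP => p; rewrite block_snd h1.
under eq_bigr => p _ do rewrite block_fst.
by rewrite h2 sum_le_m.
Qed.

Lemma inA1E (x : I -> bool) (j : 'I_n) : inA1 m (block m x j) <-> Z1 x j /\ W2 x j.
Proof.
rewrite /inA1 /Z1 /W2; split.
  case/andP => /forallP h /andP [h1 h2]; split.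
    by move=> p; have := h p; rewrite block_fst => /negPf.
  by move: h1; under eq_bigr => p _ do rewrite block_snd.
move=> [h1 h2]; apply/andP; split.
  by apply/forallP => p; rewrite block_fst h1.
under eq_bigr => p _ do rewrite block_snd.
by rewrite h2 sum_le_m.
Qed.

Lemma X0E (x : I -> bool) : @X0 m n x <-> exists y : 'I_n -> bool,
  (\sum_(j < n) (y j : nat) = n %/ 2)%N /\
  forall j, if y j then Z1 x j /\ W2 x j else Z2 x j /\ W1 x j.
Proof.
split=> [[y [hy h]] | [y [hy h]]]; exists y; split=> // j.
  by have := h j; rewrite /inA; case: (y j); [rewrite inA1E | rewrite inA0E].
by have := h j; rewrite /inA; case: (y j); [rewrite -inA1E | rewrite -inA0E].
Qed.

Definition Fst : {set I} := [set fstp j p | j : 'I_n, p : 'I_m].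

Lemma in_Fst j p : fstp j p \in Fst.
Proof. by apply/imset2P; exists j p. Qed.

Lemma notin_Fst j p : sndp j p \notin Fst.
Proof. by apply/negP => /imset2P [j' p' _ _] /esym /fst_snd. Qed.

Lemma Z1_ext (x x' : I -> bool) j : (forall p, x (fstp j p) = x' (fstp j p)) ->
  Z1 x j -> Z1 x' j.
Proof. by move=> h h1 p; rewrite -h h1. Qed.
Lemma Z2_ext (x x' : I -> bool) j : (forall p, x (sndp j p) = x' (sndp j p)) ->
  Z2 x j -> Z2 x' j.
Proof. by move=> h h1 p; rewrite -h h1. Qed.
Lemma W1_ext (x x' : I -> bool) j : (forall p, x (fstp j p) = x' (fstp j p)) ->
  W1 x j -> W1 x' j.
Proof. by move=> h; rewrite /W1; under eq_bigr => p _ do rewrite h. Qed.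
Lemma W2_ext (x x' : I -> bool) j : (forall p, x (sndp j p) = x' (sndp j p)) ->
  W2 x j -> W2 x' j.
Proof. by move=> h; rewrite /W2; under eq_bigr => p _ do rewrite h. Qed.

Definition blkof (i : I) : 'I_n := insubd (Ordinal hn) (i %/ (2 * m))%N.

Lemma blkof_fst j p : blkof (fstp j p) = j.
Proof.
have hp : (p < 2 * m)%N by have := ltn_ord p; lia.
have [e1 _] := @divmod_blk j p hp.
apply: val_inj; rewrite /blkof /= insubdK /=; first by rewrite /fstp /= e1.
by rewrite /fstp /= unfold_in e1.
Qed.

Lemma lower d f : (d <= n %/ 2)%N -> (d <= m %/ 2)%N -> Dg d f ->
  (forall x, @X0 m n x -> f x = 0) -> f (fun i => i \in Fst) = 0.
Proof.
move=> hd1 hd2 Df h0.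
have stage : forall y : 'I_n -> bool, (\sum_(j < n) (y j : nat) = n %/ 2)%N ->
  forall s : seq 'I_n, forall x, (forall j, if y j then Z1 x j /\ (j \in s \/ W2 x j)
     else Z2 x j /\ (j \in s \/ W1 x j)) -> f x = 0.
  move=> y hy; elim=> [|j s IH] x hx.
    apply: h0; apply/X0E; exists y; split=> // j; have := hx j.
    by case: (y j) => [[h1 [//|h2]]|[h1 [//|h2]]].
  pose e := if y j then sndp j else fstp j.
  pose R := fun x : I -> bool => forall j', if j' == j then (if y j then Z1 x j else Z2 x j)
      else (if y j' then Z1 x j' /\ (j' \in s \/ W2 x j') else Z2 x j' /\ (j' \in s \/ W1 x j')).
  have inj_e : injective e.
    rewrite /e; case: (y j) => p p' /=.
      by case/sndp_inj.
    by case/fstp_inj.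
  have hcod_f : forall j' p, j' != j \/ y j -> fstp j' p \notin codom e.
    move=> j' p hj; apply/negP => /codomP [q]; rewrite /e.
    case: (y j) hj => hj; first by move/fst_snd.
    by case/fstp_inj => ejj _; case: hj => //; rewrite ejj eqxx.
  have hcod_s : forall j' p, j' != j \/ ~~ y j -> sndp j' p \notin codom e.
    move=> j' p hj; apply/negP => /codomP [q]; rewrite /e.
    case: (y j) hj => hj; last by move/esym/fst_snd.
    by case/sndp_inj => ejj _; case: hj => //; rewrite ejj eqxx.
  have hb := @ball _ d (m %/ 2) m e R f inj_e Df.
  apply: (hb _ _ _ x).
  - move: hd2; lia.
  - move=> x1 x2 hx12 Rx1 j'; have := Rx1 j'.
    case: (eqVneq j' j) => [ej|hj].
      subst j'; case hyj: (y j).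
        apply: Z1_ext => p; apply: hx12; apply: hcod_f; by right.
      apply: Z2_ext => p; apply: hx12; apply: hcod_s; by right; rewrite hyj.
    have ef : forall p, x1 (fstp j' p) = x2 (fstp j' p).
      by move=> p; apply: hx12; apply: hcod_f; left.
    have es : forall p, x1 (sndp j' p) = x2 (sndp j' p).
      by move=> p; apply: hx12; apply: hcod_s; left.
    case: (y j') => -[h1 [h2|h2]]; split; try (by left); try (by apply: Z1_ext h1);
      try (by apply: Z2_ext h1); right; [exact: W2_ext h2 | exact: W1_ext h2].
  - move=> x1 Rx1 hw; apply: IH => j'; have := Rx1 j'.
    case: (eqVneq j' j) => [ej|hj //].
    subst j'.
    rewrite /e in hw; case: (y j) hw => hw h1; split=> //; right; exact: hw.
  - move=> j'; have := hx j'; case: (eqVneq j' j) => [ej|hj].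
      by subst j'; case: (y j) => -[].
    by rewrite inE (negPf hj).
have hall : forall x, (exists y : 'I_n -> bool, (\sum_(j < n) (y j : nat) = n %/ 2)%N /\
    forall j, if y j then Z1 x j else Z2 x j) -> f x = 0.
  move=> x [y [hy hx]]; apply: (stage y hy (enum 'I_n)) => j.
  by have := hx j; case: (y j) => h; split=> //; left; rewrite mem_enum.
apply: (step3 Df) hall => U hU.
pose TB := [set j | [exists p, fstp j p \in U]].
have cTB : (#|TB| <= n %/ 2)%N.
  apply: leq_trans hd1; apply: leq_trans hU.
  apply: leq_trans (leq_imset_card blkof U); apply: subset_leq_card.
  apply/subsetP => j; rewrite inE => /existsP [p pU].
  by apply/imsetP; exists (fstp j p); rewrite ?blkof_fst.
pose Y := [set j in take (n %/ 2) (enum (~: TB))].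
have cY : #|Y| = (n %/ 2)%N.
  rewrite cardsE; apply/eqP; rewrite (card_uniqP _) ?take_uniq ?enum_uniq //.
  rewrite size_takel // -cardE cardsCs setCK card_ord.
  move: cTB; lia.
exists (fun j => j \in Y); split.
  by rewrite sum_bool_card -[RHS]cY; apply: eq_card => j; rewrite inE.
move=> j; case: ifP => hj p.
  have : j \in ~: TB by move: hj; rewrite inE => /mem_take; rewrite mem_enum.
  rewrite !inE => /existsPn /(_ p) /negPf ->; exact: andbF.
by rewrite (negPf (notin_Fst _ _)).
Qed.

End Blocks.


Lemma Dg_oflip N w (a b : basisT N w) :
  Dg 1 (fun x : 'I_N -> bool => ((a == oflip x b) : nat)%:R).
Proof.
case: a => [[i bb] z]; case: b => [[i' bb'] z'] /=.
case: (eqVneq i i') => [<-|hi]; last first.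
  apply: (Dg_ext (Dg_cst1 _ false)) => x.
  by rewrite !xpair_eqE (negPf hi).
case: (eqVneq z z') => [<-|hz]; last first.
  apply: (Dg_ext (Dg_cst1 _ false)) => x.
  by rewrite !xpair_eqE (negPf hz) andbF.
case: bb; case: bb'.
- by apply: (Dg_ext (Dg_negvar i)) => x; rewrite !xpair_eqE !eqxx /=; case: (x i).
- by apply: (Dg_ext (Dg_var i)) => x; rewrite !xpair_eqE !eqxx /=; case: (x i).
- by apply: (Dg_ext (Dg_var i)) => x; rewrite !xpair_eqE !eqxx /=; case: (x i).
- by apply: (Dg_ext (Dg_negvar i)) => x; rewrite !xpair_eqE !eqxx /=; case: (x i).
Qed.

Lemma run_Dg N w (U : nat -> 'M[C]_(Defs.dim N w)) s0 t r :
  Dg t (fun x => run U x s0 t r 0).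
Proof.
elim: t r => [|t IH] r /=.
  exact: Dg_const.
have H : Dg t.+1 (fun x => \sum_c U t.+1 r c *
   \sum_c' ((enum_val c == oflip x (enum_val c')) : nat)%:R * run U x s0 t c' 0).
  apply: Dg_sumT => c; apply: Dg_scale; apply: Dg_sumT => c'.
  exact: (Dg_mul (Dg_oflip _ _) (IH c')).
apply: (Dg_ext H) => x; rewrite !mxE; apply: eq_bigr => c _.
by rewrite !mxE; congr (_ * _); apply: eq_bigr => c' _; rewrite !mxE.
Qed.

Lemma X1_Fst m n (hm : (0 < m)%N) (hn : (0 < n)%N) :
  @X1 m n (fun i => i \in Fst hm hn).
Proof.
move=> j; apply/(inA0E hm hn); split.
  by move=> p; rewrite (negPf (notin_Fst hm hn _ _)).
rewrite /W1; under eq_bigr => p _ do rewrite (in_Fst hm hn).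
rewrite sum_nat_const card_ord muln1; exact: leq_div.
Qed.

Lemma NQ_lower m n (hm : (0 < m)%N) (hn : (0 < n)%N) T :
  (T <= n %/ 2)%N -> (T <= m %/ 2)%N -> NQ_alg (@X1 m n) (@X0 m n) T -> False.
Proof.
move=> hd1 hd2 [w [s0 [U [out [_ [h1 h0]]]]]].
have amp0 : forall s, out s == Some true ->
    run U (fun i => i \in Fst hm hn) s0 T (enum_rank s) 0 = 0.
  move=> s hs; apply: (lower hm hn hd1 hd2 (run_Dg U s0 T (enum_rank s))) => x hx.
  have := h0 x hx; rewrite /prob_out1 => /psumr_eq0P H.
  have := H (fun s _ => exprn_ge0 2 (normr_ge0 _)) s hs.
  by move/eqP; rewrite expf_eq0 /= normr_eq0 => /eqP.
have := h1 _ (X1_Fst hm hn); rewrite /prob_out1 big1 ?ltxx // => s hs.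
by rewrite amp0 // normr0 expr0n.
Qed.


Section Mats.
Variable S : finType.
Local Notation d := #|S|.

Definition kt (s : S) : 'cV[C]_d := delta_mx (enum_rank s) 0.
Definition Pm (pi : S -> S) : 'M[C]_d :=
  \matrix_(r, c) ((enum_val r == pi (enum_val c)) : nat)%:R.
Definition cj (u : 'cV[C]_d) : 'rV[C]_d := (map_mx Num.conj u)^T.

Lemma ev_eq (r : 'I_d) (s : S) : (enum_val r == s) = (r == enum_rank s).
Proof.
apply/eqP/eqP => [<-|->]; [by rewrite enum_valK | by rewrite enum_rankK].
Qed.

Lemma Pm_kt pi s : Pm pi *m kt s = kt (pi s).
Proof.
apply/matrixP => r c; rewrite !mxE (bigD1 (enum_rank s)) //= big1 ?addr0.
  by rewrite !mxE enum_rankK eqxx ev_eq (ord1 c) !andbT mulr1.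
by move=> j /negPf hj; rewrite !mxE hj mulr0.
Qed.

Lemma conj_nat (b : bool) : ((b : nat)%:R : C)^* = (b : nat)%:R.
Proof. exact: conjC_nat. Qed.

Lemma Pm_unitary pi : involutive pi -> unitary (Pm pi).
Proof.
move=> inv; rewrite /unitary; apply/matrixP => r c.
rewrite !mxE (bigD1 (enum_rank (pi (enum_val r)))) //= big1 ?addr0.
  rewrite !mxE conj_nat enum_rankK inv eqxx mul1r.
  by rewrite ev_eq enum_valK eq_sym.
move=> j hj; rewrite !mxE conj_nat.
suff -> : (enum_val r == pi (enum_val j)) = false by rewrite mul0r.
apply/negP => /eqP e; move: hj; rewrite e inv enum_valK eqxx //.
Qed.

Definition dotc (u v : 'cV[C]_d) : C := \sum_i (u i 0)^* * v i 0.

Definition Hh (v : 'cV[C]_d) (e : 'I_d) : 'M[C]_d :=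
  1%:M - (delta_mx e 0 - v) *m cj (delta_mx e 0 - v).

Lemma cj_mulE (u w : 'cV[C]_d) : cj u *m w = (dotc u w)%:M.
Proof.
apply/matrixP => i j; rewrite (ord1 i) (ord1 j) !mxE /dotc.
by apply: eq_bigr => k _; rewrite !mxE.
Qed.

Lemma map_conj_cj (u : 'cV[C]_d) : (map_mx Num.conj (u *m cj u))^T = u *m cj u.
Proof.
apply/matrixP => i j; rewrite !mxE (bigD1 0) //= big1 ?addr0; last by move=> k; rewrite (ord1 k) eqxx.
rewrite (bigD1 0) //= big1 ?addr0; last by move=> k; rewrite (ord1 k) eqxx.
by rewrite /cj !mxE rmorphM /= conjCK mulrC.
Qed.

Lemma dotc_u (v : 'cV[C]_d) e : dotc v v = 1 -> v e 0 = 0 ->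
  dotc (delta_mx e 0 - v) (delta_mx e 0 - v) = 2.
Proof.
move=> h1 h0; rewrite /dotc.
have E : forall i, ((delta_mx e 0 - v) i 0)^* * (delta_mx e 0 - v) i 0 =
    (v i 0)^* * v i 0 + ((i == e) : nat)%:R.
  move=> i; rewrite !mxE eqxx andbT; case: (eqVneq i e) => [->|hi] /=.
    by rewrite h0 subr0 rmorph1 !mulr1 mulr0 add0r.
  by rewrite sub0r rmorphN mulrNN addr0.
under eq_bigr => i _ do rewrite E.
rewrite big_split /=; move: h1; rewrite /dotc => ->.
rewrite (bigD1 e) //= eqxx big1 ?addr0 //.
by move=> i /negPf ->.
Qed.

Lemma Hh_adj (v : 'cV[C]_d) e : (map_mx Num.conj (Hh v e))^T = Hh v e.
Proof.
rewrite /Hh; have E := map_conj_cj (delta_mx e 0 - v).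
by rewrite map_mxB map_mx1 linearB /= trmx1 E.
Qed.

Lemma Hh_unitary (v : 'cV[C]_d) e : dotc v v = 1 -> v e 0 = 0 -> unitary (Hh v e).
Proof.
move=> h1 h0; rewrite /unitary Hh_adj /Hh.
set u := delta_mx e 0 - v.
rewrite mulmxBl mul1mx mulmxBr mulmx1 -!mulmxA [cj u *m (u *m cj u)]mulmxA cj_mulE.
rewrite dotc_u // mul_scalar_mx -scalemxAr scaler_nat mulr2n.
set X := u *m cj u.
have -> : X - (X + X) = - X by rewrite opprD addrA subrr add0r.
by rewrite opprK subrK.
Qed.

Lemma Hh_kt (v : 'cV[C]_d) e : v e 0 = 0 -> Hh v e *m delta_mx e 0 = v.
Proof.
move=> h0; rewrite /Hh mulmxBl mul1mx -mulmxA cj_mulE.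
have -> : dotc (delta_mx e 0 - v) (delta_mx e 0) = 1.
  rewrite /dotc (bigD1 e) //= big1 ?addr0.
    by rewrite !mxE !eqxx h0 subr0 rmorph1 mulr1.
  by move=> i /negPf hi; rewrite !mxE hi mulr0.
by rewrite mulmx1 opprB addrC subrK.
Qed.

Lemma Hh_amp (v : 'cV[C]_d) e (psi : 'cV[C]_d) : v e 0 = 0 ->
  (Hh v e *m psi) e 0 = \sum_i (v i 0)^* * psi i 0.
Proof.
move=> h0; rewrite /Hh mulmxBl mul1mx -mulmxA cj_mulE !mxE.
rewrite (bigD1 0) //= big1 ?addr0; last by move=> k; rewrite (ord1 k) eqxx.
rewrite !mxE !eqxx /= h0 subr0 mul1r mulr1n /dotc.
have -> : \sum_i ((delta_mx e 0 - v) i 0)^* * psi i 0 =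
   psi e 0 - \sum_i (v i 0)^* * psi i 0.
  have E : forall i, ((delta_mx e 0 - v) i 0)^* * psi i 0 =
      ((i == e) : nat)%:R * psi i 0 - (v i 0)^* * psi i 0.
    move=> i; rewrite !mxE rmorphB mulrBl eqxx andbT; congr (_ - _).
    by case: (i == e); rewrite ?rmorph1 ?rmorph0.
  under eq_bigr => i _ do rewrite E.
  rewrite sumrB (bigD1 e) //= eqxx mul1r big1 ?addr0 //.
  by move=> i /negPf ->; rewrite mul0r.
by rewrite opprB addrC subrK.
Qed.

Lemma dotc_ge0 (v : 'cV[C]_d) : 0 <= dotc v v.
Proof. by apply: sumr_ge0 => i _; rewrite mulrC mul_conjC_ge0. Qed.

Lemma dotc_eq0 (v : 'cV[C]_d) i : dotc v v = 0 -> v i 0 = 0.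
Proof.
move/psumr_eq0P => H; apply/eqP; rewrite -mul_conjC_eq0 mulrC; apply/eqP.
by apply: H => // j _; rewrite mulrC mul_conjC_ge0.
Qed.

Lemma normalize (v : 'cV[C]_d) : dotc v v != 0 ->
  let c := (sqrtC (dotc v v))^-1 in
  [/\ dotc (c *: v) (c *: v) = 1, c^* = c & c != 0].
Proof.
move=> nz c.
have cr : c^* = c by apply: conj_Creal; rewrite rpredV; apply: sqrtC_real; exact: dotc_ge0.
have c2 : c * c = (dotc v v)^-1 by rewrite -expr2 exprVn sqrtCK.
split=> //.
  rewrite /dotc; under eq_bigr => i _ do rewrite !mxE rmorphM /= cr mulrACA c2.
  by rewrite -mulr_sumr -/(dotc v v) mulVf.
by rewrite invr_eq0 sqrtC_eq0.
Qed.

Lemma unitary_mul (A B : 'M[C]_d) : unitary A -> unitary B -> unitary (A *m B).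
Proof.
rewrite /unitary => hA hB.
rewrite (map_mxM (Num.conj_op : {rmorphism C -> C})) trmx_mul mulmxA -[A *m B *m _]mulmxA.
by rewrite hB mulmx1 hA.
Qed.

Lemma kt_entry (s : S) r : kt s r 0 = ((r == enum_rank s) : nat)%:R.
Proof. by rewrite /kt mxE eqxx andbT. Qed.

Lemma sum_kt_entry (J : finType) (c : J -> C) (f : J -> S) r :
  (\sum_j c j *: kt (f j)) r 0 = \sum_j c j * ((r == enum_rank (f j)) : nat)%:R.
Proof. by rewrite summxE; apply: eq_bigr => j _; rewrite !mxE eqxx andbT. Qed.

End Mats.


Section Alg.
Variables (N T : nat) (K : finType) (L : K -> nat -> 'I_N).
Variables (al0 : K -> C) (be0 : K -> {ffun 'I_T -> bool} -> C).
Hypothesis hT : (0 < T)%N.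
Variables (k0 k1 : K) (a1 : {ffun 'I_T -> bool}).
Hypothesis hal : al0 k0 != 0.
Hypothesis hbe : be0 k1 a1 != 0.

Definition W := (K * {ffun 'I_T -> bool})%type.
Local Notation w := #|{: W}|.
Local Notation S := (basisT N w).

Definition a0 : {ffun 'I_T -> bool} := [ffun _ => false].
Definition enc k a : 'I_w := enum_rank ((k, a) : W).
Definition s0 : S := (L k0 0, true, enc k0 a0).
Definition e0 : 'I_#|{: S}| := enum_rank s0.

Definition rd (a : {ffun 'I_T -> bool}) (s : nat) : bool :=
  if insub s is Some o then a o else false.
Definition upd (a : {ffun 'I_T -> bool}) (s : nat) (b : bool) : {ffun 'I_T -> bool} :=
  [ffun o => if val o == s then b else a o].
Definition sw (p q i : 'I_N) := if i == p then q else if i == q then p else i.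

Definition pi (t : nat) (s : S) : S :=
  let: (i, b, z) := s in let: (k, a) := enum_val z in
  (sw (L k t.-1) (L k t) i, rd a t.-1, enc k (upd a t.-1 b)).

Definition v0a : 'cV[C]_#|{: S}| := \sum_k al0 k *: kt (L k 0, false, enc k a0).
Definition ca := (sqrtC (dotc v0a v0a))^-1.
Definition va := ca *: v0a.
Definition v0b : 'cV[C]_#|{: S}| :=
  \sum_(ka : W) be0 ka.1 ka.2 *: kt (L ka.1 T, false, enc ka.1 ka.2).
Definition cb := (sqrtC (dotc v0b v0b))^-1.
Definition vb := cb *: v0b.

Definition Ualg (t : nat) : 'M[C]_#|{: S}| :=
  if t == 0%N then Hh va e0 else if (t < T)%N then Pm (pi t)
  else if t == T then Hh vb e0 *m Pm (pi T) else 1%:M.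

Definition outalg (s : S) : option bool := Some (s == s0).

Lemma rdE a s (hs : (s < T)%N) : rd a s = a (Ordinal hs).
Proof. by rewrite /rd insubT /=; congr (a _); apply: val_inj. Qed.

Lemma rd_upd a s b : (s < T)%N -> rd (upd a s b) s = b.
Proof. by move=> hs; rewrite rdE ffunE /= eqxx. Qed.

Lemma upd_upd a s b : (s < T)%N -> upd (upd a s b) s (rd a s) = a.
Proof.
move=> hs; apply/ffunP => o; rewrite !ffunE; case: eqP => // eo.
by rewrite rdE; congr (a _); apply: val_inj.
Qed.

Lemma sw_inv p q : involutive (sw p q).
Proof.
move=> i; rewrite /sw; case: (eqVneq i p) => [->|hp].
  by rewrite eqxx; case: (eqVneq q p) => [->|hq] //; rewrite eqxx.
case: (eqVneq i q) => [->|hq]; first by rewrite eqxx.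
by rewrite (negPf hp) (negPf hq).
Qed.

Lemma pi_inv t : (0 < t <= T)%N -> involutive (pi t).
Proof.
move=> ht [[i b] z]; rewrite /pi.
case E: (enum_val z) => [k a].
have hs : (t.-1 < T)%N by lia.
rewrite /enc enum_rankK rd_upd // upd_upd // sw_inv -E enum_valK //.
Qed.

Lemma entry_b_false (J : finType) (c : J -> C) (f : J -> S) :
  (forall j, (f j).1.2 = false) -> (\sum_j c j *: kt (f j)) e0 0 = 0.
Proof.
move=> hf; rewrite sum_kt_entry big1 // => j _.
suff -> : (e0 == enum_rank (f j)) = false by rewrite mulr0.
apply/negP => /eqP /(can_inj enum_rankK) E; have := hf j; rewrite -E /s0 //.
Qed.

Lemma va_e0 : va e0 0 = 0.
Proof. by rewrite /va mxE /v0a entry_b_false ?mulr0. Qed.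

Lemma v0b_e0 : v0b e0 0 = 0.
Proof.
by rewrite /v0b entry_b_false.
Qed.

Lemma vb_e0 : vb e0 0 = 0.
Proof. by rewrite /vb mxE v0b_e0 mulr0. Qed.

Lemma enc_inj k a k' a' : enc k a = enc k' a' -> k = k' /\ a = a'.
Proof. by move/(can_inj enum_rankK) => [-> ->]. Qed.

Lemma v0a_at k : v0a (enum_rank ((L k 0, false, enc k a0) : S)) 0 = al0 k.
Proof.
rewrite /v0a sum_kt_entry (bigD1 k) //= eqxx mulr1 big1 ?addr0 // => k' hk.
suff -> : (enum_rank ((L k 0, false, enc k a0) : S) == enum_rank ((L k' 0, false, enc k' a0) : S)) = false.
  by rewrite mulr0.
apply/negP => /eqP /(can_inj enum_rankK) [_ /enc_inj [ek _]].
by move: hk; rewrite ek eqxx.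
Qed.

Lemma v0b_at k a : v0b (enum_rank ((L k T, false, enc k a) : S)) 0 = be0 k a.
Proof.
rewrite /v0b sum_kt_entry (bigD1 (k, a)) //= eqxx mulr1 big1 ?addr0 // => [[k' a']] hk.
suff -> : (enum_rank ((L k T, false, enc k a) : S) == enum_rank ((L k' T, false, enc k' a') : S)) = false.
  by rewrite mulr0.
apply/negP => /eqP /(can_inj enum_rankK) [_ /enc_inj [ek ea]].
by move: hk; rewrite ek ea eqxx.
Qed.

Lemma dotc_nz (v : 'cV[C]_#|{: S}|) r : v r 0 != 0 -> dotc v v != 0.
Proof. by move=> h; apply/negP => /eqP /(dotc_eq0 r) /eqP; rewrite (negPf h). Qed.

Lemma v0a_nz : dotc v0a v0a != 0.
Proof. by apply: (dotc_nz (r := enum_rank ((L k0 0, false, enc k0 a0) : S))); rewrite v0a_at. Qed.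

Lemma v0b_nz : dotc v0b v0b != 0.
Proof. by apply: (dotc_nz (r := enum_rank ((L k1 T, false, enc k1 a1) : S))); rewrite v0b_at. Qed.

Definition pre (t : nat) (k : K) (x : 'I_N -> bool) : {ffun 'I_T -> bool} :=
  [ffun o : 'I_T => (o < t)%N && x (L k o)].
Definition stt (t : nat) (k : K) (x : 'I_N -> bool) : S := (L k t, false, enc k (pre t k x)).

Lemma pre0 k x : pre 0 k x = a0.
Proof. by apply/ffunP => o; rewrite !ffunE. Qed.

Lemma step_state t k x : (t < T)%N -> pi t.+1 (@oflip N w x (stt t k x)) = stt t.+1 k x.
Proof.
move=> ht; rewrite /stt /= /enc enum_rankK /= /sw eqxx rdE ffunE ltnn /=.
congr (_, _, _); congr (enum_rank (_, _)); apply/ffunP => o; rewrite !ffunE ltnS.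
case: (eqVneq (val o) t) => [->|ho]; first by rewrite leqnn.
by rewrite ltn_neqAle ho.
Qed.

Lemma push (M : 'M[C]_#|{: S}|) c (f : K -> S) :
  M *m (c *: \sum_k al0 k *: kt (f k)) = c *: \sum_k al0 k *: (M *m kt (f k)).
Proof.
rewrite -scalemxAr mulmx_sumr; congr (_ *: _); apply: eq_bigr => k _.
by rewrite -scalemxAr.
Qed.

Lemma push_Pm (p : S -> S) c (f : K -> S) :
  Pm p *m (c *: \sum_k al0 k *: kt (f k)) = c *: \sum_k al0 k *: kt (p (f k)).
Proof.
rewrite push; congr (_ *: _); apply: eq_bigr => k _.
by rewrite Pm_kt.
Qed.

Lemma oracleE x : @oracle N w x = Pm (@oflip N w x).
Proof. by []. Qed.

Lemma run_mid x t : (t < T)%N -> run Ualg x s0 t = ca *: \sum_k al0 k *: kt (stt t k x).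
Proof.
elim: t => [_|t IH ht] /=.
  rewrite /Ualg /= /ket -/e0 Hh_kt ?va_e0 // /va /v0a; congr (_ *: _).
have ht' : (t < T)%N by lia.
rewrite IH // /Ualg /= ht oracleE !push_Pm; congr (_ *: _); apply: eq_bigr => k _.
by rewrite step_state.
Qed.

Lemma run_T x : run Ualg x s0 T = Hh vb e0 *m (ca *: \sum_k al0 k *: kt (stt T k x)).
Proof.
have -> : run Ualg x s0 T = Ualg T *m (@oracle N w x *m run Ualg x s0 T.-1).
  have eT : T = T.-1.+1 by lia.
  rewrite (f_equal (fun k => run Ualg x s0 k) eT) /=.
  by rewrite (f_equal (fun k => Ualg k) (esym eT)).
have hT1 : (T.-1 < T)%N by lia.
rewrite run_mid // /Ualg /= ltnn eqxx.
have -> : (T == 0%N) = false by lia.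
rewrite oracleE push_Pm -mulmxA push_Pm; congr (_ *m (_ *: _)); apply: eq_bigr => k _.
have e1 := step_state k x hT1.
have eT : T.-1.+1 = T by lia.
by rewrite eT in e1; rewrite e1.
Qed.

Definition Aalg (x : 'I_N -> bool) : C :=
  \sum_k al0 k * (be0 k [ffun o : 'I_T => x (L k o)])^*.

Lemma cb_real : cb^* = cb.
Proof. by have [_ h _] := normalize v0b_nz. Qed.

Lemma amp x : run Ualg x s0 T e0 0 = ca * cb * Aalg x.
Proof.
rewrite run_T Hh_amp ?vb_e0 //.
have E : forall i, (ca *: \sum_k al0 k *: kt (stt T k x)) i 0 =
    ca * \sum_k al0 k * ((i == enum_rank (stt T k x)) : nat)%:R.
  by move=> i; rewrite mxE sum_kt_entry.
under eq_bigr => i _ do rewrite E mulrCA mulr_sumr.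
rewrite -mulr_sumr exchange_big /= -mulrA; congr (_ * _).
rewrite /Aalg mulr_sumr; apply: eq_bigr => k _.
rewrite (bigD1 (enum_rank (stt T k x))) //= eqxx mulr1 big1 ?addr0; last first.
  by move=> i /negPf ->; rewrite !mulr0.
rewrite /vb mxE /stt v0b_at rmorphM /= cb_real.
have -> : pre T k x = [ffun o : 'I_T => x (L k o)].
  by apply/ffunP => o; rewrite !ffunE ltn_ord.
by rewrite mulrC mulrA [al0 k * cb]mulrC mulrA.
Qed.

Lemma probE x : prob_out1 Ualg outalg x s0 T = `|ca * cb * Aalg x| ^+ 2.
Proof.
rewrite /prob_out1 (eq_bigl (pred1 s0)); last by move=> s; rewrite /outalg /=; case: (s == s0).
by rewrite big_pred1_eq amp.
Qed.

Theorem GenAlg (F1 F0 : ('I_N -> bool) -> Prop) :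
  (forall x, F1 x -> Aalg x != 0) -> (forall x, F0 x -> Aalg x = 0) -> NQ_alg F1 F0 T.
Proof.
move=> h1 h0; exists w, s0, Ualg, outalg; split; last split.
- move=> t ht; rewrite /Ualg; case: (eqVneq t 0%N) => [_|t0].
    have [n1 _ _] := normalize v0a_nz.
    by apply: Hh_unitary => //; exact: va_e0.
  case: ifP => tT; first by apply: Pm_unitary; apply: pi_inv; lia.
  have -> : t == T by lia.
  apply: unitary_mul; last by apply: Pm_unitary; apply: pi_inv; lia.
  have [n1 _ _] := normalize v0b_nz.
  by apply: Hh_unitary => //; exact: vb_e0.
- move=> x hx; rewrite probE; apply: exprn_gt0; rewrite normr_gt0.
  have [_ _ na] := normalize v0a_nz; have [_ _ nb] := normalize v0b_nz.
  by rewrite !mulf_neq0 // h1.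
- by move=> x hx; rewrite probE h0 // mulr0 normr0 expr0n.
Qed.

End Alg.


Section Upper.
Variables m n : nat.
Hypotheses (hm : (0 < m)%N) (hme : ~~ odd m) (hn : (0 < n)%N) (hne : ~~ odd n).
Local Notation N := (2 * m * n)%N.

Definition blk (t : nat) : 'I_n := insubd (Ordinal hn) t.
Lemma blkE t : (t < n)%N -> val (blk t) = t.
Proof. by move=> ht; rewrite /blk insubdK. Qed.

Lemma m2 : (m = 2 * (m %/ 2))%N.
Proof. have := divn_eq m 2; rewrite modn2 (negPf hme) addn0 mulnC; lia. Qed.
Lemma n2 : (n = 2 * (n %/ 2))%N.
Proof. have := divn_eq n 2; rewrite modn2 (negPf hne) addn0 mulnC; lia. Qed.

Lemma sum_y (y : 'I_n -> bool) : (\sum_(j < n) (y j : nat) = n %/ 2)%N ->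
  #|[set j | ~~ y j]| = (n %/ 2)%N.
Proof.
move=> hy; have := sum_bool_neg y; rewrite hy sum_bool_card => h.
have := n2; lia.
Qed.

Section CaseA.
Local Notation TA := (n %/ 2).+1.
Definition KA := {ffun 'I_TA -> 'I_m}.
Definition LA (k : KA) (t : nat) : 'I_N := fstp hm hn (blk t) (k (inord t)).
Definition alA (k : KA) : C := 1.
Definition beA (k : KA) (a : {ffun 'I_TA -> bool}) : C := ([forall o, a o] : nat)%:R.

Lemma TA_le : (TA <= n)%N.
Proof. have := n2; lia. Qed.

Lemma AA x : Aalg LA alA beA x = (\sum_(k : KA) ([forall o : 'I_TA, x (LA k o)] : nat))%:R.
Proof.
rewrite /Aalg natr_sum; apply: eq_bigr => k _.
by rewrite /alA /beA mul1r conjC_nat; under eq_forallb => o do rewrite ffunE.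
Qed.

Lemma caseA_X1 x : @X1 m n x -> Aalg LA alA beA x != 0.
Proof.
move=> hx; rewrite AA pnatr_eq0 -lt0n.
have hp : forall j : 'I_n, exists p, x (fstp hm hn j p).
  move=> j; have := hx j; move/(inA0E hm hn) => [_]; rewrite /W1 => hw.
  apply/existsP; apply: contraTT hw => /existsPn hno.
  rewrite -ltnNge big1 ?ltn_divRL ?muln0 //; first by have := m2; lia.
  by move=> p _; rewrite (negPf (hno p)).
pose k : KA := [ffun o : 'I_TA => odflt (Ordinal hm) [pick p | x (fstp hm hn (blk o) p)]].
rewrite (bigD1 k) //= ltn_addr // lt0b; apply/forallP => o.
rewrite /LA /k ffunE inord_val.
case: pickP => [p //|hno]; have [p hp'] := hp (blk o); by have := hno p; rewrite hp'.
Qed.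

Lemma caseA_X0 x : @X0 m n x -> Aalg LA alA beA x = 0.
Proof.
case/(X0E hm hn) => y [hy hx]; rewrite AA.
suff /existsP [j /andP [hj yj]] : [exists j : 'I_n, (j < TA)%N && y j].
  rewrite big1 // => k _; apply/eqP; rewrite eqb0; apply/forallPn.
  exists (inord j); have := hx j; rewrite yj => -[h1 _].
  by rewrite /LA inordK // (_ : blk j = j) ?h1 //; apply: val_inj; rewrite blkE.
apply: contraT => /existsPn hall.
have : (TA <= #|[set j | ~~ y j]|)%N.
  have inj : injective (fun o : 'I_TA => blk o).
    move=> o1 o2 /(congr1 val); rewrite !blkE; try (have := ltn_ord o1; have := ltn_ord o2; have := TA_le; lia).
    by move=> e; apply: val_inj.
  rewrite -[X in (X <= _)%N]card_ord -(card_imset _ inj); apply: subset_leq_card.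
  apply/subsetP => j /imsetP [o _ ->]; rewrite inE.
  have := hall (blk o); rewrite negb_and blkE ?(leq_trans (ltn_ord o) TA_le) //.
  by rewrite ltn_ord.
by rewrite sum_y // ltnn.
Qed.

Lemma caseA : NQ_alg (@X1 m n) (@X0 m n) TA.
Proof.
apply: (@GenAlg N TA KA LA alA beA (ltn0Sn _) ([ffun => Ordinal hm] : KA) ([ffun => Ordinal hm] : KA) ([ffun => true] : {ffun 'I_TA -> bool})).
- by rewrite /alA oner_neq0.
- rewrite /beA; under eq_forallb => o do rewrite ffunE.
  have -> : [forall o : 'I_TA, true] by apply/forallP. 
  exact: oner_neq0.
- exact: caseA_X1.
- exact: caseA_X0.
Qed.
End CaseA.

Section CaseB.
Local Notation TB := (m %/ 2).+1.
Definition KB := ('I_n * {ffun 'I_TB -> 'I_m})%type.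
Definition LB (k : KB) (t : nat) : 'I_N := sndp hm hn k.1 (k.2 (inord t)).
Definition alB (k : KB) : C := (injectiveb k.2 : nat)%:R.
Definition beB (k : KB) (a : {ffun 'I_TB -> bool}) : C :=
  ((2 * [forall o, ~~ a o]) : nat)%:R - 1.

Lemma TB_le : (TB <= m)%N.
Proof. have := m2; lia. Qed.

Definition pinj : {ffun 'I_TB -> 'I_m} := [ffun o => widen_ord TB_le o].
Lemma pinj_inj : injectiveb pinj.
Proof. by apply/injectiveP => o1 o2; rewrite !ffunE => /(congr1 val) /= e; apply: val_inj. Qed.

Definition MB : C := (\sum_(p : {ffun 'I_TB -> 'I_m}) (injectiveb p : nat))%:R.

Lemma MB_nz : MB != 0.
Proof. by rewrite /MB pnatr_eq0 -lt0n (bigD1 pinj) //= pinj_inj. Qed.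

Lemma blockval x (y : 'I_n -> bool) j (p : {ffun 'I_TB -> 'I_m}) :
  (if y j then Z1 hm hn x j /\ W2 hm hn x j else Z2 hm hn x j /\ W1 hm hn x j) ->
  injectiveb p -> [forall o : 'I_TB, ~~ x (sndp hm hn j (p o))] = ~~ y j.
Proof.
case: (y j) => -[h1 h2] pi /=; last by apply/forallP => o; rewrite h1.
apply/negP => /forallP hall.
move: h2; rewrite /W2 sum_bool_card => hw.
pose Q := [set q : 'I_m | x (sndp hm hn j q)].
have : (TB <= #|~: Q|)%N.
  rewrite -[X in (X <= _)%N]card_ord -(card_imset _ (injectiveP _ pi)).
  apply: subset_leq_card; apply/subsetP => q /imsetP [o _ ->].
  by rewrite !inE; exact: hall.
rewrite cardsCs setCK card_ord; move: hw; rewrite -/Q => hw.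
have := m2; have := card_ord m; lia.
Qed.

Lemma AB x (y : 'I_n -> bool) :
  (forall j, if y j then Z1 hm hn x j /\ W2 hm hn x j else Z2 hm hn x j /\ W1 hm hn x j) ->
  Aalg LB alB beB x = MB * \sum_(j < n) (((2 * ~~ y j) : nat)%:R - 1).
Proof.
move=> hx; rewrite /Aalg -(pair_bigA _ (fun j p => alB (j, p) *
   (beB (j, p) [ffun o : 'I_TB => x (LB (j, p) o)])^*)) /=.
rewrite mulr_sumr; apply: eq_bigr => j _.
rewrite /MB natr_sum mulr_suml; apply: eq_bigr => p _.
rewrite /alB /beB /=; case: (boolP (injectiveb p)) => pi; last by rewrite !mul0r.
rewrite mul1r rmorphB rmorph1 /= conjC_nat.
under eq_forallb => o do rewrite ffunE /LB inord_val.
by rewrite /= (blockval (hx j)) // mul1r.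
Qed.

Lemma caseB_X1 x : @X1 m n x -> Aalg LB alB beB x != 0.
Proof.
move=> hx; rewrite (@AB x (fun _ => false)); last first.
  by move=> j; apply/(inA0E hm hn); exact: hx.
rewrite mulf_neq0 ?MB_nz //.
under eq_bigr => j _ do rewrite /= muln1 (_ : 2%:R - 1 = 1 :> C) ?mulr2n ?addrK //.
by rewrite sumr_const card_ord pnatr_eq0 -lt0n.
Qed.

Lemma caseB_X0 x : @X0 m n x -> Aalg LB alB beB x = 0.
Proof.
case/(X0E hm hn) => y [hy hx]; rewrite (AB hx) sumrB -natr_sum sumr_const card_ord.
have -> : (\sum_(j < n) (2 * ~~ y j))%N = (2 * #|[set j | ~~ y j]|)%N.
  by rewrite -big_distrr /= sum_bool_card.
by rewrite sum_y // -n2 subrr mulr0.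
Qed.

Lemma caseB : NQ_alg (@X1 m n) (@X0 m n) TB.
Proof.
apply: (@GenAlg N TB KB LB alB beB (ltn0Sn _) ((Ordinal hn, pinj) : KB)
   ((Ordinal hn, pinj) : KB) ([ffun => false] : {ffun 'I_TB -> bool})).
- by rewrite /alB /= pinj_inj oner_neq0.
- rewrite /beB; under eq_forallb => o do rewrite ffunE.
  have -> : [forall o : 'I_TB, ~~ false] by apply/forallP.
  by rewrite muln1 mulr2n addrK oner_neq0.
- exact: caseB_X1.
- exact: caseB_X0.
Qed.
End CaseB.

End Upper.

Local Close Scope ring_scope.

Theorem theorem1 (m n : nat) (hm : (0 < m)%N) (hme : ~~ odd m)
    (hn : (0 < n)%N) (hne : ~~ odd n) :
  @NQ_is (2 * m * n) (@X1 m n) (@X0 m n) (minn (n %/ 2) (m %/ 2)).+1.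
Proof.
split.
  case: (leqP (n %/ 2) (m %/ 2)) => h.
    exact: caseA.
  exact: caseB.
move=> T hT; rewrite ltnNge; apply/negP => hle.
have hle' : (T <= minn (n %/ 2) (m %/ 2))%N by rewrite -ltnS.
apply: (NQ_lower hm hn _ _ hT).
  exact: leq_trans hle' (geq_minl _ _).
exact: leq_trans hle' (geq_minr _ _).
Qed.
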